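(* If $\mathcal{R}$ is a finite family of axis-parallel rectangles in general position that is triangle-free and non-crossing, then its intersection graph $G_{\mathcal{R}}$ is planar.
   Context: Rectangles are closed axis-parallel rectangles $X\times Y$; general position means all specifying intervals have pairwise distinct endpoints. Two rectangles intersect if they share a point; $G_{\mathcal{R}}$ has vertex set $\mathcal{R}$ and an edge between any two distinct intersecting rectangles. A family is triangle-free if no three of its rectangles are pairwise intersecting. Two rectangles cross if they intersect but neither contains a corner of the other; a family is non-crossing if no two of its rectangles cross. *)

(* Defs.v *)
From Stdlib Require Import Reals Lra.
Open Scope R_scope.

Record rect := Rect {
  x1 : R; x2 : R; y1 : R; y2 : R;
  x_lt : x1 < x2; y_lt : y1 < y2 }.

Definition in_rect (r : rect) (p : R * R) : Prop :=
  x1 r <= fst p <= x2 r /\ y1 r <= snd p <= y2 r.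

Definition intersect (r s : rect) : Prop :=
  exists p, in_rect r p /\ in_rect s p.

Definition corners (r : rect) : list (R * R) :=
  ((x1 r, y1 r) :: (x1 r, y2 r) :: (x2 r, y1 r) :: (x2 r, y2 r) :: nil)%list.

Definition contains_corner_of (r s : rect) : Prop :=
  exists c, List.In c (corners s) /\ in_rect r c.

Definition cross (r s : rect) : Prop :=
  intersect r s /\ ~ contains_corner_of r s /\ ~ contains_corner_of s r.

(* A finite family of n rectangles, indexed by 0..n-1. *)
Definition general_position (n : nat) (F : nat -> rect) : Prop :=
  forall i j, (i < n)%nat -> (j < n)%nat -> i <> j ->
    x1 (F i) <> x1 (F j) /\ x1 (F i) <> x2 (F j) /\
    x2 (F i) <> x1 (F j) /\ x2 (F i) <> x2 (F j) /\
    y1 (F i) <> y1 (F j) /\ y1 (F i) <> y2 (F j) /\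
    y2 (F i) <> y1 (F j) /\ y2 (F i) <> y2 (F j).

Definition triangle_free (n : nat) (F : nat -> rect) : Prop :=
  forall i j k, (i < n)%nat -> (j < n)%nat -> (k < n)%nat ->
    i <> j -> j <> k -> i <> k ->
    ~ (intersect (F i) (F j) /\ intersect (F j) (F k) /\ intersect (F i) (F k)).

Definition non_crossing (n : nat) (F : nat -> rect) : Prop :=
  forall i j, (i < n)%nat -> (j < n)%nat -> i <> j -> ~ cross (F i) (F j).

Definition ig_edge (F : nat -> rect) (i j : nat) : Prop :=
  i <> j /\ intersect (F i) (F j).

Definition cont01 (g : R -> R * R) : Prop :=
  forall t, 0 <= t <= 1 -> forall eps, eps > 0 -> exists delta, delta > 0 /\
    forall s, 0 <= s <= 1 -> Rabs (s - t) < delta ->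
      Rabs (fst (g s) - fst (g t)) < eps /\ Rabs (snd (g s) - snd (g t)) < eps.

(* A graph on vertex set {0,...,n-1} with (symmetric) edge relation E is planar
   if it has a drawing in the plane: distinct points for the vertices, and for
   every edge a simple arc (continuous injective image of [0,1]) joining its
   endpoints whose interior avoids all vertex points, with interiors of arcs
   of distinct edges disjoint. *)
Definition planar (n : nat) (E : nat -> nat -> Prop) : Prop :=
  exists (pos : nat -> R * R) (arc : nat -> nat -> R -> R * R),
    (forall i j, (i < n)%nat -> (j < n)%nat -> pos i = pos j -> i = j) /\
    (forall i j, (i < j)%nat -> (j < n)%nat -> E i j ->
       cont01 (arc i j) /\ arc i j 0 = pos i /\ arc i j 1 = pos j /\
       (forall s t, 0 <= s <= 1 -> 0 <= t <= 1 -> arc i j s = arc i j t -> s = t) /\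
       (forall t k, 0 < t < 1 -> (k < n)%nat -> arc i j t <> pos k)) /\
    (forall i j k l, (i < j)%nat -> (j < n)%nat -> (k < l)%nat -> (l < n)%nat ->
       E i j -> E k l -> (i, j) <> (k, l) ->
       forall s t, 0 < s < 1 -> 0 < t < 1 -> arc i j s <> arc k l t).

(* Main.v *)
Require Import Defs.
From Stdlib Require Import Reals Lra Lia Psatz Classical ClassicalEpsilon.
Open Scope R_scope.


Definition inI (A:rect) (p:R*R) := x1 A < fst p < x2 A /\ y1 A < snd p < y2 A.
Definition ltb (a b:R) : bool := if Rlt_dec a b then true else false.

Lemma ltbP a b : (ltb a b = true /\ a < b) \/ (ltb a b = false /\ b <= a).
Proof. unfold ltb; destruct (Rlt_dec a b); [left|right]; split; auto; lra. Qed.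

Lemma ltb_swap a b : a <> b -> ltb b a = negb (ltb a b).
Proof. intros H; unfold ltb; destruct (Rlt_dec a b), (Rlt_dec b a); simpl; auto; lra. Qed.

Definition gf (A B : rect) (p : R*R) : R :=
  let b1 := ltb (x1 A) (x1 B) in let b2 := ltb (x2 A) (x2 B) in
  let c1 := ltb (y1 A) (y1 B) in let c2 := ltb (y2 A) (y2 B) in
  let xa := if b1 then x1 B else x1 A in
  let xb := if b2 then x2 A else x2 B in
  let ya := if c1 then y1 B else y1 A in
  let yb := if c2 then y2 A else y2 B in
  let px := fst p in let py := snd p in
  match b1, b2, c1, c2 with
  | true, true, true, true => (yb-ya)*(px-xa) + (xb-xa)*(py-yb)
  | false, false, false, false => - ((yb-ya)*(px-xa) + (xb-xa)*(py-yb))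
  | true, true, false, false => (yb-ya)*(px-xa) - (xb-xa)*(py-ya)
  | false, false, true, true => - ((yb-ya)*(px-xa) - (xb-xa)*(py-ya))
  | _, _, false, true => if b1 then px - xa else xb - px
  | _, _, true, false => if b1 then px - xb else xa - px
  | false, true, _, _ => if c1 then py - ya else yb - py
  | true, false, _, _ => if c1 then py - yb else ya - py
  end.

Definition tp (A B : rect) : R*R :=
  let b1 := ltb (x1 A) (x1 B) in let b2 := ltb (x2 A) (x2 B) in
  let c1 := ltb (y1 A) (y1 B) in let c2 := ltb (y2 A) (y2 B) in
  let xa := if b1 then x1 B else x1 A in
  let xb := if b2 then x2 A else x2 B in
  let ya := if c1 then y1 B else y1 A in
  let yb := if c2 then y2 A else y2 B in
  match b1, b2, c1, c2 with
  | true,true,true,true | false,false,false,false | true,true,false,false | false,false,true,true =>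
     ((xa+xb)/2, (ya+yb)/2)
  | _,_,false,true => (if b1 then xa else xb, (ya+yb)/2)
  | _,_,true,false => (if b1 then xb else xa, (ya+yb)/2)
  | false,true,_,_ => ((xa+xb)/2, if c1 then ya else yb)
  | true,false,_,_ => ((xa+xb)/2, if c1 then yb else ya)
  end.

Definition pairok (A B : rect) : Prop :=
  x1 A <> x1 B /\ x1 A <> x2 B /\ x2 A <> x1 B /\ x2 A <> x2 B /\
  y1 A <> y1 B /\ y1 A <> y2 B /\ y2 A <> y1 B /\ y2 A <> y2 B /\
  x1 A <= x2 B /\ x1 B <= x2 A /\ y1 A <= y2 B /\ y1 B <= y2 A /\
  ~ (x1 B < x1 A /\ x2 A < x2 B /\ y1 A < y1 B /\ y2 B < y2 A) /\
  ~ (x1 A < x1 B /\ x2 B < x2 A /\ y1 B < y1 A /\ y2 A < y2 B) /\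
  ~ (x1 B < x1 A /\ x2 A < x2 B /\ y1 B < y1 A /\ y2 A < y2 B) /\
  ~ (x1 A < x1 B /\ x2 B < x2 A /\ y1 A < y1 B /\ y2 B < y2 A).

Ltac cases4 A B :=
  destruct (ltbP (x1 A) (x1 B)) as [[E1 q1]|[E1 q1]]; rewrite ?E1;
  destruct (ltbP (x2 A) (x2 B)) as [[E2 q2]|[E2 q2]]; rewrite ?E2;
  destruct (ltbP (y1 A) (y1 B)) as [[E3 q3]|[E3 q3]]; rewrite ?E3;
  destruct (ltbP (y2 A) (y2 B)) as [[E4 q4]|[E4 q4]]; rewrite ?E4.

Ltac pok H A B := destruct H as (g1&g2&g3&g4&g5&g6&g7&g8&i1&i2&i3&i4&nc1&nc2&nc3&nc4);
  pose proof (x_lt A); pose proof (x_lt B); pose proof (y_lt A); pose proof (y_lt B).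

Lemma gf_anti A B p : pairok A B -> gf B A p = - gf A B p.
Proof.
  intros H. pok H A B. unfold gf.
  rewrite (ltb_swap (x1 A)), (ltb_swap (x2 A)), (ltb_swap (y1 A)), (ltb_swap (y2 A)) by auto.
  cases4 A B; simpl; try ring; exfalso; lra.
Qed.

Lemma tp_sym A B : pairok A B -> tp B A = tp A B.
Proof.
  intros H. pok H A B. unfold tp.
  rewrite (ltb_swap (x1 A)), (ltb_swap (x2 A)), (ltb_swap (y1 A)), (ltb_swap (y2 A)) by auto.
  cases4 A B; simpl; try (f_equal; field); exfalso; lra.
Qed.

Definition lin (p q : R*R) (s : R) : R*R :=
  (fst p + s*(fst q - fst p), snd p + s*(snd q - snd p)).

Lemma gf_aff A B p q s : gf A B (lin p q s) = gf A B p + s * (gf A B q - gf A B p).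
Proof. unfold gf, lin; cases4 A B; simpl; ring. Qed.

Lemma tp_in A B : pairok A B -> in_rect A (tp A B) /\ in_rect B (tp A B) /\ gf A B (tp A B) = 0.
Proof.
  intros H. pok H A B. unfold tp, gf, in_rect.
  cases4 A B; simpl; (split; [|split]); try (split; split; lra); try field; exfalso; lra.
Qed.

Lemma gf_pos A B p : pairok A B -> in_rect A p -> gf A B p > 0 -> in_rect B p.
Proof.
  intros H. pok H A B. unfold gf, in_rect. destruct p as [px py]; simpl.
  cases4 A B; simpl; intros [[? ?] [? ?]] G; try (exfalso; lra); (split; split; [nra|nra|nra|nra]).
Qed.

Lemma gf_posI A B p : pairok A B -> inI A p -> gf A B p >= 0 -> in_rect B p.
Proof.
  intros H. pok H A B. unfold gf, in_rect, inI. destruct p as [px py]; simpl.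
  cases4 A B; simpl; intros [[? ?] [? ?]] G; try (exfalso; lra); (split; split; [nra|nra|nra|nra]).
Qed.


Ltac ltac_poker :=
  intros L HL1 HL2 [[? ?] [? ?]]; unfold in_rect; simpl in *;
  revert HL1 HL2; unfold Rabs; destruct Rcase_abs; destruct Rcase_abs; intros;
  split; split; lra.

Ltac tp1 t := exists t; simpl; split; [split; split; lra | split; [split; split; lra | nra]].

Lemma pt_choose A B : pairok A B ->
  (exists p, inI A p /\ in_rect B p /\ gf A B p < 0) \/
  (exists d0, d0 > 0 /\
    ((exists c, (c = x1 B \/ c = x2 B) /\ forall d, 0<d<d0 -> exists q, inI A q /\ gf A B q < 0 /\
       forall L:rect, d < Rabs (x1 L - c) -> d < Rabs (x2 L - c) -> in_rect L q -> in_rect L (tp A B))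
    \/ (exists c, (c = y1 B \/ c = y2 B) /\ forall d, 0<d<d0 -> exists q, inI A q /\ gf A B q < 0 /\
       forall L:rect, d < Rabs (y1 L - c) -> d < Rabs (y2 L - c) -> in_rect L q -> in_rect L (tp A B)))).
Proof.
  intros H. pok H A B. unfold tp, gf, inI, in_rect.
  cases4 A B; simpl;
  first
  [ exfalso; lra
  | left; first
    [ tp1 ((3*x1 B + x2 A)/4, (3*y1 B + y2 A)/4)
    | tp1 ((x1 A + 3*x2 B)/4, (y1 A + 3*y2 B)/4)
    | tp1 ((3*x1 B + x2 A)/4, (y1 A + 3*y2 B)/4)
    | tp1 ((x1 A + 3*x2 B)/4, (3*y1 B + y2 A)/4)
    | tp1 ((x1 B + x2 A)/2, (y1 B + y2 B)/2)
    | tp1 ((x1 A + x2 B)/2, (y1 B + y2 B)/2)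
    | tp1 ((x1 B + x2 B)/2, (y1 B + y2 A)/2)
    | tp1 ((x1 B + x2 B)/2, (y1 A + y2 B)/2) ]
  | right; first
    [ exists (x1 B - x1 A); split; [lra|]; left; exists (x1 B); split; [auto|];
      intros d Hd; exists (x1 B - d, (y1 A + y2 A)/2); split; [simpl; split; split; lra|];
      split; [simpl; lra|]; ltac_poker
    | exists (x2 A - x2 B); split; [lra|]; left; exists (x2 B); split; [auto|];
      intros d Hd; exists (x2 B + d, (y1 A + y2 A)/2); split; [simpl; split; split; lra|];
      split; [simpl; lra|]; ltac_poker
    | exists (y1 B - y1 A); split; [lra|]; right; exists (y1 B); split; [auto|];
      intros d Hd; exists ((x1 A + x2 A)/2, y1 B - d); split; [simpl; split; split; lra|];
      split; [simpl; lra|]; ltac_poker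
    | exists (y2 A - y2 B); split; [lra|]; right; exists (y2 B); split; [auto|];
      intros d Hd; exists ((x1 A + x2 A)/2, y2 B + d); split; [simpl; split; split; lra|];
      split; [simpl; lra|]; ltac_poker ] ].
Qed.


Definition good n F := general_position n F /\ triangle_free n F /\ non_crossing n F.
Definition containedR (A B : rect) := x1 B < x1 A /\ x2 A < x2 B /\ y1 B < y1 A /\ y2 A < y2 B.
Definition isleaf n (F : nat -> rect) j := exists h, (h<n)%nat /\ h <> j /\ containedR (F j) (F h).
Definition reg n (F : nat -> rect) i j := (i<n)%nat /\ (j<n)%nat /\ i<>j /\ intersect (F i) (F j) /\
   ~containedR (F i) (F j) /\ ~containedR (F j) (F i).
Definition U n F i p := inI (F i) p /\ forall l, reg n F i l -> gf (F i) (F l) p < 0.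
Definition Sc n F i p := in_rect (F i) p /\ forall l, reg n F i l -> gf (F i) (F l) p <= 0.

Lemma intersect_iff A B : intersect A B <->
  (x1 A <= x2 B /\ x1 B <= x2 A /\ y1 A <= y2 B /\ y1 B <= y2 A).
Proof.
  split.
  - intros [p [[[? ?] [? ?]] [[? ?] [? ?]]]]; lra.
  - intros (?&?&?&?). pose proof (x_lt A); pose proof (x_lt B); pose proof (y_lt A); pose proof (y_lt B).
    exists (Rmax (x1 A) (x1 B), Rmax (y1 A) (y1 B)). unfold in_rect; simpl.
    unfold Rmax; destruct Rle_dec; destruct Rle_dec; split; split; split; lra.
Qed.

Lemma intersect_sym A B : intersect A B -> intersect B A.
Proof. intros [p [? ?]]; exists p; auto. Qed.

Lemma reg_sym n F i j : reg n F i j -> reg n F j i.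
Proof. intros (?&?&?&?&?&?); repeat split; auto. apply intersect_sym; auto. Qed.

Lemma cross_of A B : intersect A B ->
  x1 B < x1 A -> x2 A < x2 B -> y1 A < y1 B -> y2 B < y2 A -> cross A B.
Proof.
  intros HI a b c d. split; [auto|split].
  - intros [cc [Hin Hr]]. simpl in Hin. unfold in_rect in Hr.
    destruct Hin as [<-|[<-|[<-|[<-|[]]]]]; simpl in Hr; lra.
  - intros [cc [Hin Hr]]. simpl in Hin. unfold in_rect in Hr.
    destruct Hin as [<-|[<-|[<-|[<-|[]]]]]; simpl in Hr; lra.
Qed.

Lemma reg_pairok n F i j : good n F -> reg n F i j -> pairok (F i) (F j).
Proof.
  intros [gp [tf nc]] (Hi&Hj&Hij&HI&C1&C2).
  destruct (gp i j Hi Hj Hij) as (?&?&?&?&?&?&?&?).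
  pose proof HI as HI'. apply intersect_iff in HI'. destruct HI' as (?&?&?&?).
  unfold containedR in *.
  repeat split; auto; try lra.
  - intros (a&b&c&d). apply (nc i j Hi Hj Hij). apply cross_of; auto.
  - intros (a&b&c&d). apply (nc j i Hj Hi (not_eq_sym Hij)). apply cross_of; auto.
    apply intersect_sym; auto.
Qed.

Lemma tri n F i j k p : good n F -> (i<n)%nat -> (j<n)%nat -> (k<n)%nat -> i<>j -> j<>k -> i<>k ->
  in_rect (F i) p -> in_rect (F j) p -> in_rect (F k) p -> False.
Proof.
  intros [gp [tf nc]] ? ? ? ? ? ? ? ? ?.
  apply (tf i j k); auto. repeat split; exists p; auto.
Qed.

Lemma inI_in A p : inI A p -> in_rect A p.
Proof. unfold inI, in_rect; lra. Qed.

Lemma U_disj n F i k p : good n F -> (i<n)%nat -> (k<n)%nat -> i<>k -> ~isleaf n F i -> ~isleaf n F k ->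
  U n F i p -> U n F k p -> False.
Proof.
  intros G Hi Hk Hik Li Lk [Ii Gi] [Ik Gk].
  assert (HI : intersect (F i) (F k)) by (exists p; split; apply inI_in; auto).
  assert (R : reg n F i k).
  { repeat split; auto.
    - intro C. apply Li. exists k; auto.
    - intro C. apply Lk. exists i; auto. }
  pose proof (Gi k R). pose proof (Gk i (reg_sym _ _ _ _ R)).
  rewrite (gf_anti _ _ _ (reg_pairok _ _ _ _ G R)) in H0. lra.
Qed.

Lemma U_conv n F i p q s : U n F i p -> Sc n F i q -> 0 <= s < 1 -> U n F i (lin p q s).
Proof.
  intros [Ip Gp] [Iq Gq] Hs. unfold inI, in_rect in *. split.
  - unfold inI, lin; cbn [fst snd]. split; split; nra.
  - intros l R. rewrite gf_aff. specialize (Gp l R). specialize (Gq l R). nra.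
Qed.

Lemma tp_S n F i j : good n F -> reg n F i j -> Sc n F i (tp (F i) (F j)).
Proof.
  intros G R. pose proof (reg_pairok _ _ _ _ G R) as P.
  destruct (tp_in _ _ P) as (T1&T2&T3). split; auto.
  intros l Rl. destruct (classic (l = j)) as [->|Hl]; [lra|].
  destruct (Rle_lt_dec (gf (F i) (F l) (tp (F i) (F j))) 0) as [|Hg]; auto.
  exfalso. pose proof (gf_pos _ _ _ (reg_pairok _ _ _ _ G Rl) T1 Hg) as T4.
  destruct R as (?&?&?&_), Rl as (?&?&?&_).
  apply (tri n F i j l (tp (F i) (F j))); auto.
Qed.

Lemma tp_S' n F i j : good n F -> reg n F i j -> Sc n F j (tp (F i) (F j)).
Proof.
  intros G R. rewrite <- (tp_sym _ _ (reg_pairok _ _ _ _ G R)). apply tp_S; auto. apply reg_sym; auto.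
Qed.

Lemma tp_notU n F i j k : good n F -> reg n F i j -> (k<n)%nat -> ~ U n F k (tp (F i) (F j)).
Proof.
  intros G R Hk [Ik Gk]. pose proof (reg_pairok _ _ _ _ G R) as P.
  destruct (tp_in _ _ P) as (T1&T2&T3).
  destruct (classic (k = i)) as [->|Hki].
  { specialize (Gk j R). lra. }
  destruct (classic (k = j)) as [->|Hkj].
  { specialize (Gk i (reg_sym _ _ _ _ R)). rewrite (gf_anti _ _ _ P), T3 in Gk. lra. }
  destruct R as (?&?&?&_).
  apply (tri n F i j k (tp (F i) (F j))); auto. apply inI_in; auto.
Qed.

Lemma tp_inj n F i j k l : good n F -> reg n F i j -> reg n F k l ->
  tp (F i) (F j) = tp (F k) (F l) -> (i = k /\ j = l) \/ (i = l /\ j = k).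
Proof.
  intros G R1 R2 E.
  destruct (tp_in _ _ (reg_pairok _ _ _ _ G R1)) as (T1&T2&_).
  destruct (tp_in _ _ (reg_pairok _ _ _ _ G R2)) as (T3&T4&_).
  rewrite <- E in T3, T4.
  destruct R1 as (?&?&?&_), R2 as (?&?&?&_).
  destruct (classic (k <> i /\ k <> j)) as [[e1 e2]|e1].
  { exfalso; apply (tri n F i j k (tp (F i) (F j))); auto. }
  destruct (classic (l <> i /\ l <> j)) as [[e3 e4]|e3].
  { exfalso; apply (tri n F i j l (tp (F i) (F j))); auto. }
  apply not_and_or in e1; apply not_and_or in e3.
  destruct e1 as [e1|e1]; apply NNPP in e1; destruct e3 as [e3|e3]; apply NNPP in e3; subst; auto; tauto.
Qed.


Lemma gap (P : nat -> Prop) (f : nat -> R) n d0 : d0 > 0 ->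
  (forall l, (l<n)%nat -> P l -> f l <> 0) ->
  exists d, 0 < d < d0 /\ forall l, (l<n)%nat -> P l -> d < Rabs (f l).
Proof.
  intros Hd0; induction n as [|n IH]; intros Hf.
  - exists (d0/2); split; [lra|]. intros; lia.
  - destruct IH as [d [Hd Hl]]. { intros l Hl HP; apply Hf; auto; lia. }
    destruct (classic (P n)) as [Pn|Pn].
    + pose proof (Hf n (Nat.lt_succ_diag_r n) Pn) as Fn.
      assert (0 < Rabs (f n)) by (apply Rabs_pos_lt; auto).
      exists (Rmin d (Rabs (f n) / 2)). split.
      * unfold Rmin; destruct Rle_dec; lra.
      * intros l Hl' HP. destruct (Nat.eq_dec l n) as [->|Hne].
        -- unfold Rmin; destruct Rle_dec; lra.
        -- assert (l < n)%nat by lia. specialize (Hl l H0 HP). unfold Rmin; destruct Rle_dec; lra.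
    + exists d. split; auto. intros l Hl' HP. destruct (Nat.eq_dec l n) as [->|Hne]; [tauto|].
      apply Hl; auto; lia.
Qed.

Lemma exists_U n F i : good n F -> (i<n)%nat -> ~ isleaf n F i -> exists p, U n F i p.
Proof.
  intros G Hi Li.
  destruct (classic (exists j, reg n F i j)) as [[j R]|NR].
  2:{ exists ((x1 (F i) + x2 (F i))/2, (y1 (F i) + y2 (F i))/2). split.
      - pose proof (x_lt (F i)); pose proof (y_lt (F i)). unfold inI; simpl; split; split; lra.
      - intros l Rl. exfalso. apply NR; eauto. }
  pose proof (reg_pairok _ _ _ _ G R) as P.
  destruct (tp_in _ _ P) as (T1&T2&T3).
  destruct R as (Hi'&Hj&Hij&HI&C1&C2) eqn:ER.
  pose proof G as (gp&_&_).
  destruct (pt_choose _ _ P) as [[p (Ip&Jp&Gp)]|[d0 [Hd0 [[c [Hc Hq]]|[c [Hc Hq]]]]]].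
  - exists p. split; auto. intros l Rl.
    destruct (classic (l = j)) as [->|Hl]; auto.
    destruct (Rlt_le_dec (gf (F i) (F l) p) 0) as [|Hg]; auto. exfalso.
    pose proof (gf_posI _ _ _ (reg_pairok _ _ _ _ G Rl) Ip (Rle_ge _ _ Hg)).
    destruct Rl as (?&?&?&_).
    apply (tri n F i j l p); auto. apply inI_in; auto.
  - destruct (gap (fun l => l <> j) (fun l => x1 (F l) - c) n d0 Hd0) as [d1 [Hd1 Hl1]].
    { intros l Hl Hlj. destruct (gp l j Hl Hj Hlj) as (a1&a2&a3&a4&_). destruct Hc as [->| ->]; intro E; [apply a1|apply a2]; lra. }
    destruct (gap (fun l => l <> j) (fun l => x2 (F l) - c) n d1 ltac:(lra)) as [d2 [Hd2 Hl2]].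
    { intros l Hl Hlj. destruct (gp l j Hl Hj Hlj) as (a1&a2&a3&a4&_). destruct Hc as [->| ->]; intro E; [apply a3|apply a4]; lra. }
    destruct (Hq d2 ltac:(lra)) as [q (Iq&Gq&Lq)].
    exists q. split; auto. intros l Rl.
    destruct (classic (l = j)) as [->|Hl]; auto.
    destruct (Rlt_le_dec (gf (F i) (F l) q) 0) as [|Hg]; auto. exfalso.
    pose proof (gf_posI _ _ _ (reg_pairok _ _ _ _ G Rl) Iq (Rle_ge _ _ Hg)) as Hql.
    destruct Rl as (?&Hln&?&_).
    pose proof (Hl1 l Hln Hl). pose proof (Hl2 l Hln Hl).
    apply (tri n F i j l (tp (F i) (F j))); auto. apply Lq; [cbv beta in *; lra | cbv beta in *; lra | exact Hql].
  - destruct (gap (fun l => l <> j) (fun l => y1 (F l) - c) n d0 Hd0) as [d1 [Hd1 Hl1]].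
    { intros l Hl Hlj. destruct (gp l j Hl Hj Hlj) as (_&_&_&_&a1&a2&a3&a4). destruct Hc as [->| ->]; intro E; [apply a1|apply a2]; lra. }
    destruct (gap (fun l => l <> j) (fun l => y2 (F l) - c) n d1 ltac:(lra)) as [d2 [Hd2 Hl2]].
    { intros l Hl Hlj. destruct (gp l j Hl Hj Hlj) as (_&_&_&_&a1&a2&a3&a4). destruct Hc as [->| ->]; intro E; [apply a3|apply a4]; lra. }
    destruct (Hq d2 ltac:(lra)) as [q (Iq&Gq&Lq)].
    exists q. split; auto. intros l Rl.
    destruct (classic (l = j)) as [->|Hl]; auto.
    destruct (Rlt_le_dec (gf (F i) (F l) q) 0) as [|Hg]; auto. exfalso.
    pose proof (gf_posI _ _ _ (reg_pairok _ _ _ _ G Rl) Iq (Rle_ge _ _ Hg)) as Hql.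
    destruct Rl as (?&Hln&?&_).
    pose proof (Hl1 l Hln Hl). pose proof (Hl2 l Hln Hl).
    apply (tri n F i j l (tp (F i) (F j))); auto. apply Lq; [cbv beta in *; lra | cbv beta in *; lra | exact Hql].
Qed.


Definition pw (p m q : R*R) (s : R) : R*R :=
  if Rle_dec s (1/2) then lin p m (2*s) else lin m q (2*s-1).

Definition phi (a m b s : R) : R := if Rle_dec s (1/2) then a + 2*s*(m-a) else m + (2*s-1)*(b-m).

Lemma pw_fst p m q s : fst (pw p m q s) = phi (fst p) (fst m) (fst q) s.
Proof. unfold pw, phi, lin; destruct Rle_dec; simpl; ring. Qed.
Lemma pw_snd p m q s : snd (pw p m q s) = phi (snd p) (snd m) (snd q) s.
Proof. unfold pw, phi, lin; destruct Rle_dec; simpl; ring. Qed.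

Lemma phi_lip a m b s t : Rabs (phi a m b s - phi a m b t) <= 2*(Rabs (m-a) + Rabs (b-m)) * Rabs (s-t).
Proof.
  pose proof (Rabs_pos (m-a)); pose proof (Rabs_pos (b-m)); pose proof (Rabs_pos (s-t)).
  unfold phi. destruct (Rle_dec s (1/2)), (Rle_dec t (1/2)).
  - replace (a + 2*s*(m-a) - (a + 2*t*(m-a))) with (2*((s-t)*(m-a))) by ring.
    rewrite Rabs_mult, Rabs_mult, (Rabs_right 2) by lra. nra.
  - replace (a + 2*s*(m-a) - (m + (2*t-1)*(b-m))) with ((2*s-1)*(m-a) + -((2*t-1)*(b-m))) by ring.
    eapply Rle_trans; [apply Rabs_triang|]. rewrite Rabs_Ropp, !Rabs_mult.
    rewrite (Rabs_left1 (2*s-1)) by lra. rewrite (Rabs_right (2*t-1)) by lra.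
    rewrite (Rabs_left1 (s-t)) by lra. nra.
  - replace (m + (2*s-1)*(b-m) - (a + 2*t*(m-a))) with ((2*s-1)*(b-m) + -((2*t-1)*(m-a))) by ring.
    eapply Rle_trans; [apply Rabs_triang|]. rewrite Rabs_Ropp, !Rabs_mult.
    rewrite (Rabs_left1 (2*t-1)) by lra. rewrite (Rabs_right (2*s-1)) by lra.
    rewrite (Rabs_right (s-t)) by lra. nra.
  - replace (m + (2*s-1)*(b-m) - (m + (2*t-1)*(b-m))) with (2*((s-t)*(b-m))) by ring.
    rewrite Rabs_mult, Rabs_mult, (Rabs_right 2) by lra. nra.
Qed.

Lemma pw_cont p m q : cont01 (pw p m q).
Proof.
  intros t Ht eps He.
  set (L := 2*(Rabs (fst m - fst p) + Rabs (fst q - fst m)) + 2*(Rabs (snd m - snd p) + Rabs (snd q - snd m)) + 1).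
  assert (HL : L > 0) by (unfold L; pose proof (Rabs_pos (fst m - fst p)); pose proof (Rabs_pos (fst q - fst m));
     pose proof (Rabs_pos (snd m - snd p)); pose proof (Rabs_pos (snd q - snd m)); lra).
  exists (eps / L). split; [apply Rdiv_lt_0_compat; lra|].
  intros s Hs Hst. rewrite !pw_fst, !pw_snd.
  assert (E : L * Rabs (s - t) < eps).
  { apply (Rmult_lt_compat_l L) in Hst; auto. unfold Rdiv in Hst.
    rewrite <- Rmult_assoc, (Rmult_comm L eps), Rmult_assoc, Rinv_r, Rmult_1_r in Hst; lra. }
  pose proof (Rabs_pos (s-t)).
  pose proof (phi_lip (fst p) (fst m) (fst q) s t).
  pose proof (phi_lip (snd p) (snd m) (snd q) s t).
  pose proof (Rabs_pos (fst m - fst p)); pose proof (Rabs_pos (fst q - fst m));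
  pose proof (Rabs_pos (snd m - snd p)); pose proof (Rabs_pos (snd q - snd m)).
  unfold L in E. split; nra.
Qed.

Lemma pw_0 p m q : pw p m q 0 = p.
Proof. unfold pw, lin; destruct Rle_dec; [|lra]. destruct p; simpl; f_equal; ring. Qed.
Lemma pw_1 p m q : pw p m q 1 = q.
Proof. unfold pw, lin; destruct Rle_dec; [lra|]. destruct q; simpl; f_equal; ring. Qed.

Lemma pw_mid p q s : pw p (lin p q (1/2)) q s = lin p q s.
Proof. unfold pw, lin; destruct Rle_dec; simpl; f_equal; field. Qed.

Lemma pw_rep p m q s : 0 <= s <= 1 ->
  (pw p m q s = lin p m (2*s) /\ 0 <= 2*s <= 1) \/ (pw p m q s = lin q m (2-2*s) /\ 0 <= 2-2*s < 1).
Proof.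
  intros Hs. unfold pw. destruct Rle_dec.
  - left; split; auto; lra.
  - right; split; [|lra]. unfold lin; f_equal; ring.
Qed.

Lemma lin_eq_same p t a b : lin p t a = lin p t b -> t <> p -> a = b.
Proof.
  destruct p as [px py], t as [tx ty]; unfold lin; simpl. intros E N. injection E; intros E2 E1.
  destruct (Req_dec tx px) as [e1|e1].
  - destruct (Req_dec ty py) as [e2|e2]; [subst; tauto|]. apply (Rmult_eq_reg_r (ty-py)); [lra|]. nra.
  - apply (Rmult_eq_reg_r (tx-px)); [lra|]. nra.
Qed.

Lemma lin_0 p t : lin p t 0 = p.
Proof. destruct p; unfold lin; simpl; f_equal; ring. Qed.


Definition padd (p v : R*R) : R*R := (fst p + fst v, snd p + snd v).

Lemma corner_in A : in_rect A (x1 A, y1 A).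
Proof. pose proof (x_lt A); pose proof (y_lt A); unfold in_rect; simpl; lra. Qed.

Lemma contained_in A B p : containedR A B -> in_rect A p -> in_rect B p.
Proof. unfold containedR, in_rect; lra. Qed.

Lemma leaf_unique n F j h l : good n F -> (j<n)%nat -> (h<n)%nat -> h <> j -> containedR (F j) (F h) ->
  (l<n)%nat -> l <> j -> intersect (F l) (F j) -> l = h.
Proof.
  intros G Hj Hh Hhj C Hl Hlj [p [P1 P2]].
  destruct (classic (l = h)) as [|Hlh]; auto. exfalso.
  apply (tri n F l j h p); auto. apply (contained_in _ _ _ C P2).
Qed.

Lemma host_nonleaf n F j h : good n F -> (j<n)%nat -> (h<n)%nat -> h <> j -> containedR (F j) (F h) ->
  ~ isleaf n F h.
Proof.
  intros G Hj Hh Hhj C [h' (Hh'&Hne&C')].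
  destruct (classic (h' = j)) as [->|Hj'].
  - unfold containedR in *; lra.
  - apply (tri n F j h h' (x1 (F j), y1 (F j))); auto.
    + apply corner_in.
    + apply (contained_in _ _ _ C), corner_in.
    + apply (contained_in _ _ _ C'), (contained_in _ _ _ C), corner_in.
Qed.

Lemma reg_nonleaf n F i l : good n F -> reg n F i l -> ~ isleaf n F l.
Proof.
  intros G (Hi&Hl&Hil&[p [P1 P2]]&C1&C2) [h (Hh&Hne&C)].
  destruct (classic (h = i)) as [->|Hhi].
  - apply C2; auto.
  - apply (tri n F i l h p); auto. apply (contained_in _ _ _ C P2).
Qed.

Lemma edge_reg n F i j : (i<n)%nat -> (j<n)%nat -> ig_edge F i j -> ~ isleaf n F i -> ~ isleaf n F j -> reg n F i j.
Proof.
  intros Hi Hj [Hij HI] Li Lj. repeat split; auto.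
  - intro C; apply Li; exists j; auto.
  - intro C; apply Lj; exists i; auto.
Qed.

Lemma eps_lemma (P : nat -> Prop) (a b : nat -> R) n d0 : d0 > 0 ->
  (forall l, (l<n)%nat -> P l -> a l < 0) ->
  exists e, 0 < e < d0 /\ forall l, (l<n)%nat -> P l -> a l + e * b l < 0.
Proof.
  intros Hd0; induction n as [|n IH]; intros Ha.
  - exists (d0/2); split; [lra|]. intros; lia.
  - destruct IH as [e [He Hl]]. { intros l Hl HP; apply Ha; auto; lia. }
    destruct (classic (P n)) as [Pn|Pn].
    + pose proof (Ha n (Nat.lt_succ_diag_r n) Pn) as An.
      set (e' := Rmin e (- a n / (Rabs (b n) + 1))).
      assert (Hb : 0 <= Rabs (b n)) by apply Rabs_pos.
      assert (Q : 0 < - a n / (Rabs (b n) + 1)) by (apply Rdiv_lt_0_compat; lra).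
      assert (He' : 0 < e' <= e) by (unfold e', Rmin; destruct Rle_dec; lra).
      exists e'. split; [lra|].
      intros l Hl' HP. destruct (Nat.eq_dec l n) as [->|Hne].
      * assert (e' * (Rabs (b n) + 1) <= - a n).
        { assert (e' <= - a n / (Rabs (b n) + 1)) by (unfold e', Rmin; destruct Rle_dec; lra).
          apply (Rmult_le_compat_r (Rabs (b n) + 1)) in H; [|lra].
          unfold Rdiv in H. rewrite Rmult_assoc, Rinv_l, Rmult_1_r in H; lra. }
        pose proof (Rle_abs (b n)). nra.
      * assert (l < n)%nat by lia. specialize (Hl l H HP). specialize (Ha l Hl' HP). nra.
    + exists e. split; auto. intros l Hl' HP. destruct (Nat.eq_dec l n) as [->|Hne]; [tauto|].
      apply Hl; auto; lia.
Qed.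

Lemma bound_lemma (f : nat -> R) n : exists K, forall l, (l<n)%nat -> f l < K.
Proof.
  induction n as [|n [K HK]].
  - exists 0; intros; lia.
  - exists (Rmax K (f n + 1)). intros l Hl. destruct (Nat.eq_dec l n) as [->|Hne].
    + unfold Rmax; destruct Rle_dec; lra.
    + assert (l<n)%nat by lia. specialize (HK l H). unfold Rmax; destruct Rle_dec; lra.
Qed.

Lemma U_open n F h p v : U n F h p -> exists e, e > 0 /\ U n F h (lin p (padd p v) e).
Proof.
  intros [[[a1 a2] [a3 a4]] Gp].
  destruct (eps_lemma (fun l => reg n F h l) (fun l => gf (F h) (F l) p)
     (fun l => gf (F h) (F l) (padd p v) - gf (F h) (F l) p) n 1) as [e1 [He1 Hl]]; [lra| |].
  { intros l _ R; apply Gp; auto. }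
  set (c := fun k : nat => match k with O => x1 (F h) - fst p | S O => fst p - x2 (F h) | S (S O) => y1 (F h) - snd p | _ => snd p - y2 (F h) end).
  set (d := fun k : nat => match k with O => - fst v | S O => fst v | S (S O) => - snd v | _ => snd v end).
  destruct (eps_lemma (fun _ => True) c d 4 e1) as [e2 [He2 Hk]]; [lra| |].
  { intros k Hk _. unfold c. destruct k as [|[|[|k]]]; lra. }
  exists e2. split; [lra|]. split.
  - pose proof (Hk 0%nat ltac:(lia) I); pose proof (Hk 1%nat ltac:(lia) I);
    pose proof (Hk 2%nat ltac:(lia) I); pose proof (Hk 3%nat ltac:(lia) I).
    unfold c, d in *. unfold inI, lin, padd; simpl. split; split; nra.
  - intros l R. rewrite gf_aff. assert (l < n)%nat by (destruct R as (_&?&_); auto).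
    specialize (Hl l H R). specialize (Gp l R). cbv beta in Hl. nra.
Qed.

Lemma U_Sc n F i p : U n F i p -> Sc n F i p.
Proof. intros [I G]; split; [apply inI_in; auto|]. intros l R; specialize (G l R); lra. Qed.

Lemma U_conv2 n F i p q s : U n F i p -> U n F i q -> 0 <= s <= 1 -> U n F i (lin p q s).
Proof.
  intros Up Uq Hs. destruct (Req_dec s 1) as [->|Hs1].
  - replace (lin p q 1) with q; auto. destruct q; unfold lin; simpl; f_equal; ring.
  - apply U_conv; auto. apply U_Sc; auto. lra.
Qed.

Lemma ray_reg n F e p t1 t2 a b : U n F e p -> Sc n F e t1 -> Sc n F e t2 -> ~ U n F e t1 -> ~ U n F e t2 ->
  0 < a <= 1 -> 0 < b <= 1 -> lin p t1 a = lin p t2 b -> t1 = t2.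
Proof.
  intros Up S1 S2 N1 N2 Ha Hb E.
  destruct p as [px py], t1 as [ux uy], t2 as [wx wy]. unfold lin in E; simpl in E.
  injection E; intros Ey Ex.
  destruct (Rlt_le_dec a b) as [Hab|Hab].
  - exfalso. apply N2. replace (wx, wy) with (lin (px,py) (ux,uy) (a/b)).
    + apply U_conv; auto. split; [apply Rlt_le, Rdiv_lt_0_compat; lra|].
      apply (Rmult_lt_reg_r b); [lra|]. unfold Rdiv; rewrite Rmult_assoc, Rinv_l; lra.
    + unfold lin; simpl. f_equal.
      * apply (Rmult_eq_reg_l b); [|lra]. field_simplify; [|lra]. nra.
      * apply (Rmult_eq_reg_l b); [|lra]. field_simplify; [|lra]. nra.
  - destruct (Rlt_le_dec b a) as [Hba|Hba].
    + exfalso. apply N1. replace (ux, uy) with (lin (px,py) (wx,wy) (b/a)).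
      * apply U_conv; auto. split; [apply Rlt_le, Rdiv_lt_0_compat; lra|].
        apply (Rmult_lt_reg_r a); [lra|]. unfold Rdiv; rewrite Rmult_assoc, Rinv_l; lra.
      * unfold lin; simpl. f_equal.
        -- apply (Rmult_eq_reg_l a); [|lra]. field_simplify; [|lra]. nra.
        -- apply (Rmult_eq_reg_l a); [|lra]. field_simplify; [|lra]. nra.
    + assert (a = b) by lra. subst b. f_equal.
      * apply (Rmult_eq_reg_l a); [|lra]. nra.
      * apply (Rmult_eq_reg_l a); [|lra]. nra.
Qed.


Lemma choice_fun {A B : Type} (P : A -> B -> Prop) : (forall a, exists b, P a b) -> exists f, forall a, P a (f a).
Proof.
  intros H. exists (fun a => proj1_sig (constructive_indefinite_description _ (H a))).
  intros a. exact (proj2_sig (constructive_indefinite_description _ (H a))).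
Qed.

Lemma lin_1 p t : lin p t 1 = t.
Proof. destruct t; unfold lin; simpl; f_equal; ring. Qed.

Theorem lemma8 (n : nat) (F : nat -> rect) :
  general_position n F -> triangle_free n F -> non_crossing n F ->
  planar n (ig_edge F).
Proof.
  intros gp tf nc. assert (G : good n F) by (split; auto).
  destruct (choice_fun (fun i p => (i<n)%nat -> ~isleaf n F i -> U n F i p)) as [P HP].
  { intros i. destruct (classic ((i<n)%nat /\ ~isleaf n F i)) as [[Hi Li]|N].
    - destruct (exists_U n F i G Hi Li) as [p Hp]; exists p; auto.
    - exists (0,0); intros; exfalso; auto. }
  destruct (choice_fun (fun j h => isleaf n F j -> (h<n)%nat /\ h<>j /\ containedR (F j) (F h))) as [H HH].
  { intros j. destruct (classic (isleaf n F j)) as [[h Hh]|N]; [exists h; auto| exists O; tauto]. }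
  destruct (choice_fun (fun h K => forall l, reg n F h l -> fst (tp (F h) (F l)) - fst (P h) > 0 ->
         snd (tp (F h) (F l)) - snd (P h) < K * (fst (tp (F h) (F l)) - fst (P h)))) as [K HK].
  { intros h. destruct (bound_lemma (fun l => (snd (tp (F h) (F l)) - snd (P h)) / (fst (tp (F h) (F l)) - fst (P h))) n) as [K HK].
    exists K. intros l R Hx. assert (Hl : (l<n)%nat) by (destruct R as (_&?&_); auto). specialize (HK l Hl).
    cbv beta in HK. apply (Rmult_lt_compat_r (fst (tp (F h) (F l)) - fst (P h))) in HK; auto.
    unfold Rdiv in HK; rewrite Rmult_assoc, Rinv_l in HK; lra. }
  set (v := fun j => (1, K (H j) + INR j)).
  destruct (choice_fun (fun j e => isleaf n F j -> (j<n)%nat -> e > 0 /\ U n F (H j) (lin (P (H j)) (padd (P (H j)) (v j)) e))) as [E HE].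
  { intros j. destruct (classic (isleaf n F j /\ (j<n)%nat)) as [[L Hj]|N].
    - destruct (HH j L) as (Hh&Hhj&C).
      assert (NL : ~ isleaf n F (H j)) by (apply (host_nonleaf n F j (H j)); auto).
      destruct (U_open n F (H j) (P (H j)) (v j) (HP (H j) Hh NL)) as [e He].
      exists e; intros; exact He.
    - exists 0; intros; exfalso; auto. }
  assert (LF : forall l, (l<n)%nat -> isleaf n F l ->
     (H l < n)%nat /\ H l <> l /\ containedR (F l) (F (H l)) /\ ~ isleaf n F (H l) /\ E l > 0 /\
     U n F (H l) (P (H l)) /\
     forall c, 0 <= c <= E l -> U n F (H l) (lin (P (H l)) (padd (P (H l)) (v l)) c)).
  { intros l Hl L. destruct (HH l L) as (Hh&Hhl&C).
    assert (NL : ~ isleaf n F (H l)) by (apply (host_nonleaf n F l (H l)); auto).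
    destruct (HE l L Hl) as [Ep UE]. pose proof (HP (H l) Hh NL) as UP.
    refine (conj Hh (conj Hhl (conj C (conj NL (conj Ep (conj UP _)))))). intros c Hc.
    replace (lin (P (H l)) (padd (P (H l)) (v l)) c) with
      (lin (P (H l)) (lin (P (H l)) (padd (P (H l)) (v l)) (E l)) (c / E l)).
    - apply U_conv2; auto. split; [apply Rmult_le_pos; [lra|apply Rlt_le, Rinv_0_lt_compat; lra]|].
      apply (Rmult_le_reg_r (E l)); [lra|]. unfold Rdiv; rewrite Rmult_assoc, Rinv_l; lra.
    - unfold lin, padd; simpl; f_equal; field; lra. }
  assert (RAV : forall e e' a k, reg n F e e' -> 0 < a <= 1 -> (k<n)%nat -> ~isleaf n F k ->
     lin (P e) (tp (F e) (F e')) a = P k -> False).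
  { intros e e' a k R Ha Hk Lk Eq.
    assert (Le : ~isleaf n F e) by (apply (reg_nonleaf n F e' e G), reg_sym; auto).
    assert (He : (e<n)%nat) by (destruct R; auto).
    pose proof (HP k Hk Lk) as Uk. pose proof (HP e He Le) as Ue.
    destruct (Req_dec a 1) as [->|Ha1].
    - rewrite lin_1 in Eq. apply (tp_notU n F e e' k G R Hk). rewrite Eq; auto.
    - assert (Ux : U n F e (lin (P e) (tp (F e) (F e')) a)) by (apply U_conv; auto; [apply tp_S; auto|lra]).
      destruct (Nat.eq_dec k e) as [->|Hke].
      + rewrite <- (lin_0 (P e) (tp (F e) (F e'))) in Eq at 2.
        apply lin_eq_same in Eq; [lra|]. intro T. apply (tp_notU n F e e' e G R He). rewrite T; auto.
      + apply (U_disj n F e k (P k) G He Hk (not_eq_sym Hke) Le Lk); auto. rewrite <- Eq; auto. }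
  assert (RAL : forall e e' a l c, reg n F e e' -> 0 < a <= 1 -> (l<n)%nat -> isleaf n F l -> 0 < c <= E l ->
     lin (P e) (tp (F e) (F e')) a = lin (P (H l)) (padd (P (H l)) (v l)) c -> False).
  { intros e e' a l c R Ha Hl L Hc Eq.
    destruct (LF l Hl L) as (Hh&_&_&NLh&Ep&UPh&Useg).
    assert (Ux : U n F (H l) (lin (P (H l)) (padd (P (H l)) (v l)) c)) by (apply Useg; lra).
    assert (Le : ~isleaf n F e) by (apply (reg_nonleaf n F e' e G), reg_sym; auto).
    assert (He : (e<n)%nat) by (destruct R; auto).
    destruct (Req_dec a 1) as [->|Ha1].
    - rewrite lin_1 in Eq. apply (tp_notU n F e e' (H l) G R Hh). rewrite Eq; auto.
    - assert (Ue : U n F e (lin (P e) (tp (F e) (F e')) a)) by (apply U_conv; [apply HP; auto|apply tp_S; auto|lra]).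
      destruct (Nat.eq_dec e (H l)) as [Hee|Hne].
      + rewrite <- Hee in Eq. pose proof (HK e e' R) as HKe. rewrite <- Hee in Ux.
        unfold lin, padd, v in Eq. simpl in Eq. injection Eq; intros Ey Ex.
        rewrite <- Hee in Ey. pose proof (pos_INR l).
        assert (Hx : fst (tp (F e) (F e')) - fst (P e) > 0).
        { assert (a * (fst (tp (F e) (F e')) - fst (P e)) = c) by lra.
          destruct (Rle_lt_dec (fst (tp (F e) (F e')) - fst (P e)) 0); [nra|lra]. }
        specialize (HKe Hx). nra.
      + apply (U_disj n F e (H l) _ G He Hh Hne Le NLh Ue). rewrite Eq; auto. }
  assert (RLL : forall l l' c c', (l<n)%nat -> isleaf n F l -> 0 < c <= E l -> (l'<n)%nat -> isleaf n F l' -> 0 < c' <= E l' ->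
     lin (P (H l)) (padd (P (H l)) (v l)) c = lin (P (H l')) (padd (P (H l')) (v l')) c' -> l = l' /\ c = c').
  { intros l l' c c' Hl L Hc Hl' L' Hc' Eq.
    destruct (LF l Hl L) as (Hh&_&_&NLh&Ep&UPh&Useg).
    destruct (LF l' Hl' L') as (Hh'&_&_&NLh'&Ep'&UPh'&Useg').
    assert (Hhh : H l = H l').
    { destruct (Nat.eq_dec (H l) (H l')) as [|Hne]; auto. exfalso.
      apply (U_disj n F (H l) (H l') _ G Hh Hh' Hne NLh NLh' (Useg c ltac:(lra))). rewrite Eq. apply Useg'; lra. }
    unfold lin, padd, v in Eq. simpl in Eq. injection Eq; intros Ey Ex. rewrite <- Hhh in Ey, Ex.
    assert (c = c') by lra. subst c'. split; auto.
    apply INR_eq. apply (Rmult_eq_reg_l c); [|lra]. lra. }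
  assert (RLV : forall l c k, (l<n)%nat -> isleaf n F l -> 0 < c <= E l -> (k<n)%nat -> ~isleaf n F k ->
     lin (P (H l)) (padd (P (H l)) (v l)) c = P k -> False).
  { intros l c k Hl L Hc Hk Lk Eq.
    destruct (LF l Hl L) as (Hh&_&_&NLh&Ep&UPh&Useg).
    destruct (Nat.eq_dec k (H l)) as [->|Hne].
    - apply (f_equal fst) in Eq. unfold lin, padd, v in Eq. simpl in Eq. lra.
    - apply (U_disj n F k (H l) (P k) G Hk Hh Hne Lk NLh (HP k Hk Lk)). rewrite <- Eq. apply Useg; lra. }
  assert (RAA : forall e e' a f f' b, reg n F e e' -> 0 < a <= 1 -> reg n F f f' -> 0 < b <= 1 ->
     lin (P e) (tp (F e) (F e')) a = lin (P f) (tp (F f) (F f')) b -> (e = f /\ e' = f') \/ (e = f' /\ e' = f)).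
  { intros e e' a f f' b R1 Ha R2 Hb Eq.
    assert (Le : ~isleaf n F e) by (apply (reg_nonleaf n F e' e G), reg_sym; auto).
    assert (He : (e<n)%nat) by (destruct R1; auto).
    assert (Lf : ~isleaf n F f) by (apply (reg_nonleaf n F f' f G), reg_sym; auto).
    assert (Hf : (f<n)%nat) by (destruct R2; auto).
    pose proof (HP e He Le) as Ue. pose proof (HP f Hf Lf) as Uf.
    destruct (Req_dec a 1) as [->|Ha1]; destruct (Req_dec b 1) as [->|Hb1].
    - rewrite !lin_1 in Eq. apply (tp_inj n F); auto.
    - rewrite lin_1 in Eq. exfalso. apply (tp_notU n F e e' f G R1 Hf). rewrite Eq.
      apply U_conv; auto; [apply tp_S; auto|lra].
    - rewrite lin_1 in Eq. exfalso. apply (tp_notU n F f f' e G R2 He). rewrite <- Eq.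
      apply U_conv; auto; [apply tp_S; auto|lra].
    - assert (Ux : U n F e (lin (P e) (tp (F e) (F e')) a)) by (apply U_conv; auto; [apply tp_S; auto|lra]).
      assert (Uy : U n F f (lin (P f) (tp (F f) (F f')) b)) by (apply U_conv; auto; [apply tp_S; auto|lra]).
      destruct (Nat.eq_dec e f) as [<-|Hne].
      + apply (tp_inj n F); auto. apply (ray_reg n F e (P e) _ _ a b); auto;
        first [apply tp_S; auto | apply tp_notU; auto | lra].
      + exfalso. apply (U_disj n F e f _ G He Hf Hne Le Lf Ux). rewrite Eq; auto. }
  set (pos := fun i => if excluded_middle_informative (isleaf n F i)
                       then lin (P (H i)) (padd (P (H i)) (v i)) (E i) else P i).
  set (mid := fun i j => if excluded_middle_informative (isleaf n F i \/ isleaf n F j)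
                       then lin (pos i) (pos j) (1/2) else tp (F i) (F j)).
  assert (VERT : forall k, (k<n)%nat -> (~isleaf n F k /\ pos k = P k) \/
                   (isleaf n F k /\ pos k = lin (P (H k)) (padd (P (H k)) (v k)) (E k))).
  { intros k Hk. unfold pos. destruct excluded_middle_informative; auto. }
  assert (POSINJ : forall i j, (i<n)%nat -> (j<n)%nat -> pos i = pos j -> i = j).
  { intros i j Hi Hj Eq. destruct (VERT i Hi) as [[Li Ei]|[Li Ei]]; destruct (VERT j Hj) as [[Lj Ej]|[Lj Ej]];
    rewrite Ei, Ej in Eq.
    - destruct (Nat.eq_dec i j) as [|Hne]; auto. exfalso.
      apply (U_disj n F i j (P i) G Hi Hj Hne Li Lj (HP i Hi Li)). rewrite Eq; apply HP; auto.
    - exfalso. destruct (LF j Hj Lj) as (_&_&_&_&Ep&_). apply (RLV j (E j) i); auto. lra.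
    - exfalso. destruct (LF i Hi Li) as (_&_&_&_&Ep&_). apply (RLV i (E i) j); auto. lra.
    - destruct (LF i Hi Li) as (_&_&_&_&Ep&_). destruct (LF j Hj Lj) as (_&_&_&_&Ep'&_).
      apply (RLL i j (E i) (E j)); auto; lra. }

  assert (POSNL : forall i, ~isleaf n F i -> pos i = P i).
  { intros i Li; unfold pos; destruct excluded_middle_informative; tauto. }
  assert (POSL : forall i, isleaf n F i -> pos i = lin (P (H i)) (padd (P (H i)) (v i)) (E i)).
  { intros i Li; unfold pos; destruct excluded_middle_informative; tauto. }
  assert (PT : forall i j s, (i<j)%nat -> (j<n)%nat -> ig_edge F i j -> 0 < s < 1 ->
     (exists e e' a, reg n F e e' /\ 0 < a <= 1 /\ pw (pos i) (mid i j) (pos j) s = lin (P e) (tp (F e) (F e')) a /\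
          ((e = i /\ e' = j) \/ (e = j /\ e' = i))) \/
     (exists l c, (l<n)%nat /\ isleaf n F l /\ 0 < c < E l /\
        pw (pos i) (mid i j) (pos j) s = lin (P (H l)) (padd (P (H l)) (v l)) c /\
        ((l = i /\ H l = j) \/ (l = j /\ H l = i)))).
  { intros i j s Hij Hj Eij Hs. assert (Hi : (i<n)%nat) by lia.
    destruct (classic (isleaf n F j)) as [Lj|Lj].
    - right. destruct (LF j Hj Lj) as (Hh&Hhj&C&NLh&Ep&_).
      assert (Ei : i = H j).
      { apply (leaf_unique n F j (H j) i G Hj Hh Hhj C Hi); [lia| apply Eij]. }
      exists j, (s * E j). split; [auto|split; [auto|split; [split; nra|split]]].
      + unfold mid; destruct excluded_middle_informative as [_|N]; [|tauto]. rewrite pw_mid.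
        rewrite (POSL j Lj). rewrite Ei in *. rewrite (POSNL (H j) NLh).
        unfold lin; simpl; f_equal; ring.
      + right; auto.
    - destruct (classic (isleaf n F i)) as [Li|Li].
      + right. destruct (LF i Hi Li) as (Hh&Hhi&C&NLh&Ep&_).
        assert (Ej : j = H i).
        { apply (leaf_unique n F i (H i) j G Hi Hh Hhi C Hj); [lia| apply intersect_sym, Eij]. }
        exists i, ((1-s) * E i). split; [auto|split; [auto|split; [split; nra|split]]].
        * unfold mid; destruct excluded_middle_informative as [_|N]; [|tauto]. rewrite pw_mid.
          rewrite (POSL i Li). rewrite Ej in *. rewrite (POSNL (H i) NLh).
          unfold lin; simpl; f_equal; ring.
        * left; auto.
      + left. assert (R : reg n F i j) by (apply edge_reg; auto).
        assert (Mid : mid i j = tp (F i) (F j)).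
        { unfold mid; destruct excluded_middle_informative; tauto. }
        rewrite Mid, (POSNL i Li), (POSNL j Lj).
        destruct (pw_rep (P i) (tp (F i) (F j)) (P j) s ltac:(lra)) as [[E1 A1]|[E1 A1]]; rewrite E1.
        * exists i, j, (2*s). split; auto. split; [lra|]. split; auto.
        * exists j, i, (2-2*s). split; [apply reg_sym; auto|]. split; [lra|].
          rewrite (tp_sym _ _ (reg_pairok _ _ _ _ G R)). split; auto. }
  exists pos, (fun i j => pw (pos i) (mid i j) (pos j)). split; [|split].
  - exact POSINJ.
  - intros i j Hij Hj Eij. assert (Hi : (i<n)%nat) by lia.
    split; [apply pw_cont|]. split; [apply pw_0|]. split; [apply pw_1|]. split.
    + intros s t Hs Ht Est.
      destruct (classic (isleaf n F i \/ isleaf n F j)) as [Lij|Lij].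
      * unfold mid in Est; destruct excluded_middle_informative as [_|N]; [|tauto].
        rewrite !pw_mid in Est. apply lin_eq_same in Est; auto. intro Q. apply (POSINJ j i) in Q; lia.
      * apply not_or_and in Lij. destruct Lij as [Li Lj].
        assert (R : reg n F i j) by (apply edge_reg; auto).
        assert (Mid : mid i j = tp (F i) (F j)).
        { unfold mid; destruct excluded_middle_informative; tauto. }
        rewrite Mid, (POSNL i Li), (POSNL j Lj) in Est.
        pose proof (HP i Hi Li) as Ui. pose proof (HP j Hj Lj) as Uj.
        assert (Ti : tp (F i) (F j) <> P i).
        { intro Q. apply (tp_notU n F i j i G R Hi). rewrite Q; auto. }
        assert (Tj : tp (F i) (F j) <> P j).
        { intro Q. apply (tp_notU n F i j j G R Hj). rewrite Q; auto. }
        assert (CR : forall a b, 0 <= a <= 1 -> 0 <= b < 1 ->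
             lin (P i) (tp (F i) (F j)) a = lin (P j) (tp (F i) (F j)) b -> False).
        { intros a b Ha Hb Q.
          assert (Uq : U n F j (lin (P j) (tp (F i) (F j)) b)) by (apply U_conv; [auto|apply tp_S'; auto|lra]).
          destruct (Req_dec a 1) as [->|Ha1].
          - rewrite lin_1 in Q. apply (tp_notU n F i j j G R Hj). rewrite Q; auto.
          - apply (U_disj n F i j _ G Hi Hj (proj1 Eij) Li Lj (U_conv n F i _ _ a Ui (tp_S n F i j G R) ltac:(lra))).
            rewrite Q; auto. }
        destruct (pw_rep (P i) (tp (F i) (F j)) (P j) s Hs) as [[E1 A1]|[E1 A1]];
        destruct (pw_rep (P i) (tp (F i) (F j)) (P j) t Ht) as [[E2 A2]|[E2 A2]]; rewrite E1, E2 in Est.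
        -- apply lin_eq_same in Est; auto; lra.
        -- exfalso; apply (CR _ _ A1 A2 Est).
        -- exfalso; apply (CR _ _ A2 A1 (eq_sym Est)).
        -- apply lin_eq_same in Est; auto; lra.
    + intros t k Ht Hk Eq.
      destruct (PT i j t Hij Hj Eij Ht) as [(e&e'&a&R&Ha&Ea&_)|(l&c&Hl&Ll&Hc&Ec&_)]; rewrite ?Ea, ?Ec in Eq;
      (destruct (VERT k Hk) as [[Lk Ek]|[Lk Ek]]; rewrite Ek in Eq).
      * apply (RAV e e' a k R Ha Hk Lk Eq).
      * destruct (LF k Hk Lk) as (_&_&_&_&Ep&_). apply (RAL e e' a k (E k) R Ha Hk Lk ltac:(lra) Eq).
      * apply (RLV l c k Hl Ll ltac:(lra) Hk Lk Eq).
      * destruct (LF k Hk Lk) as (_&_&_&_&Ep&_).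
        destruct (RLL l k c (E k) Hl Ll ltac:(lra) Hk Lk ltac:(lra) Eq) as [-> ->]. lra.
  - intros i j k l Hij Hj Hkl Hl Eij Ekl Ne s t Hs Ht Eq.
    destruct (PT i j s Hij Hj Eij Hs) as [(e&e'&a&R&Ha&Ea&Ie)|(m&c&Hm&Lm&Hc&Ec&Im)];
    destruct (PT k l t Hkl Hl Ekl Ht) as [(f&f'&b&R'&Hb&Eb&If)|(m'&c'&Hm'&Lm'&Hc'&Ec'&Im')];
    rewrite ?Ea, ?Ec, ?Eb, ?Ec' in Eq.
    + destruct (RAA e e' a f f' b R Ha R' Hb Eq) as [[-> ->]|[-> ->]];
      apply Ne; destruct Ie as [[-> ->]|[-> ->]]; destruct If as [[-> ->]|[-> ->]];
      f_equal; lia.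
    + apply (RAL e e' a m' c' R Ha Hm' Lm' ltac:(lra) Eq).
    + apply (RAL f f' b m c R' Hb Hm Lm ltac:(lra) (eq_sym Eq)).
    + destruct (RLL m m' c c' Hm Lm ltac:(lra) Hm' Lm' ltac:(lra) Eq) as [<- _].
      apply Ne. destruct Im as [[? ?]|[? ?]]; destruct Im' as [[? ?]|[? ?]]; subst; f_equal; lia.
Qed.
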